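(* Let $d\ge 2$. For the Gilbert--Steiner problem in $\mathbb{R}^d$ with cost $c(x)=x^{1/2}$, every branching point of every solution has degree at most $d+1$.
   Context: Let $\mu^+,\mu^-$ be finite measures on $\mathbb{R}^d$ with finite supports and equal total mass. A $(\mu^+,\mu^-)$-flow consists of a finite vertex set $V\subset\mathbb{R}^d$ containing the support of $\mu^+-\mu^-$, a finite set $E$ of unordered pairs $\{x,y\}\subset V$, and non-zero reals $m(x,y)=-m(y,x)$ on edges such that $\mu^+-\mu^-=\sum_{\{x,y\}\in E} m(x,y)(\delta_y-\delta_x)$. The Gilbert functional is $\sum_{\{x,y\}\in E}c(|m(x,y)|)\,|x-y|$; a solution is a flow minimizing it. Branching points are vertices not in $\operatorname{supp}\mu^+\cup\operatorname{supp}\mu^-$. *)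

(* Defs.v *)
From HB Require Import structures.
From mathcomp Require Import all_boot all_order all_algebra.
From mathcomp Require Import reals.
Set Implicit Arguments. Unset Strict Implicit. Unset Printing Implicit Defensive.
Import Order.TTheory GRing.Theory Num.Theory.
Local Open Scope ring_scope.

Section Gilbert.
Variables (R : realType) (d : nat).

Notation point := 'rV[R]_d.

Definition edist (x y : point) : R :=
  Num.sqrt (\sum_(i < d) (x ord0 i - y ord0 i) ^+ 2).

(* A finite measure with finite support, given by its masses at points:
   mu x = mu({x}) >= 0, and only finitely many points carry mass. *)
Definition fin_supp_measure (mu : point -> R) : Prop :=
  (forall x, 0 <= mu x) /\ exists s : seq point, forall x, mu x != 0 -> x \in s.

Definition equal_mass (mup mum : point -> R) : Prop :=
  exists s : seq point, [/\ uniq s,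
    (forall x, (mup x != 0) || (mum x != 0) -> x \in s) &
    \sum_(x <- s) mup x = \sum_(x <- s) mum x].

(* A flow: vertex list V and edge list E; an edge (x, y, m) represents the
   unordered pair {x,y} with m(x,y) = m and m(y,x) = -m. *)
Record flow := Flow { fV : seq point; fE : seq (point * point * R) }.

Definition same_pair (e f : point * point * R) : bool :=
  ((e.1.1 == f.1.1) && (e.1.2 == f.1.2)) || ((e.1.1 == f.1.2) && (e.1.2 == f.1.1)).

Definition is_flow (mup mum : point -> R) (F : flow) : Prop :=
  [/\ (forall x, mup x - mum x != 0 -> x \in fV F),
      (forall e, e \in fE F -> [/\ e.1.1 \in fV F, e.1.2 \in fV F,
                                  e.1.1 != e.1.2 & e.2 != 0]),
      pairwise (fun e f => ~~ same_pair e f) (fE F) &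
      (forall z, mup z - mum z =
         \sum_(e <- fE F) e.2 * ((z == e.1.2)%:R - (z == e.1.1)%:R))].

Definition gilbert_cost (F : flow) : R :=
  \sum_(e <- fE F) Num.sqrt `|e.2| * edist e.1.1 e.1.2.

Definition is_solution (mup mum : point -> R) (F : flow) : Prop :=
  is_flow mup mum F /\
  forall G, is_flow mup mum G -> gilbert_cost F <= gilbert_cost G.

Definition degree (F : flow) (v : point) : nat :=
  count (fun e : point * point * R => (e.1.1 == v) || (e.1.2 == v)) (fE F).

Definition is_branching_point (mup mum : point -> R) (F : flow) (v : point) : Prop :=
  [/\ v \in fV F, mup v = 0 & mum v = 0].

End Gilbert.

(* Main.v *)
Require Import Defs.
From HB Require Import structures.
From mathcomp Require Import all_boot all_order all_algebra.
From mathcomp Require Import reals.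
From mathcomp Require Import ring lra.
Set Implicit Arguments. Unset Strict Implicit. Unset Printing Implicit Defensive.
Import Order.TTheory GRing.Theory Num.Theory.
Local Open Scope ring_scope.

Section Aux.
Variables (R : realType) (d : nat).
Notation point := 'rV[R]_d.
Implicit Types (x y z : point).

Definition dot x y : R := \sum_(k < d) x ord0 k * y ord0 k.
Definition nrm x : R := Num.sqrt (dot x x).

Lemma dotC x y : dot x y = dot y x.
Proof. by apply: eq_bigr => k _; rewrite mulrC. Qed.
Lemma dotDl x y z : dot (x + y) z = dot x z + dot y z.
Proof. by rewrite /dot -big_split; apply: eq_bigr => k _; rewrite mxE mulrDl. Qed.
Lemma dotZl a x y : dot (a *: x) y = a * dot x y.
Proof. by rewrite /dot mulr_sumr; apply: eq_bigr => k _; rewrite mxE mulrA. Qed.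
Lemma dotNl x y : dot (- x) y = - dot x y.
Proof. by rewrite -scaleN1r dotZl mulN1r. Qed.
Lemma dotBl x y z : dot (x - y) z = dot x z - dot y z.
Proof. by rewrite dotDl dotNl. Qed.
Lemma dot0l y : dot 0 y = 0.
Proof. by rewrite /dot big1 // => k _; rewrite mxE mul0r. Qed.
Lemma dotDr x y z : dot x (y + z) = dot x y + dot x z.
Proof. by rewrite dotC dotDl !(dotC x). Qed.
Lemma dotZr a x y : dot x (a *: y) = a * dot x y.
Proof. by rewrite dotC dotZl dotC. Qed.
Lemma dotBr x y z : dot x (y - z) = dot x y - dot x z.
Proof. by rewrite dotC dotBl !(dotC x). Qed.
Lemma dot0r y : dot y 0 = 0.
Proof. by rewrite dotC dot0l. Qed.
Lemma dot_suml (I : Type) (r : seq I) (P : pred I) (F : I -> point) y :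
  dot (\sum_(i <- r | P i) F i) y = \sum_(i <- r | P i) dot (F i) y.
Proof. exact: (big_morph (fun x => dot x y) (fun a b => dotDl a b y) (dot0l y)). Qed.
Lemma dot_sumr (I : Type) (r : seq I) (P : pred I) (F : I -> point) y :
  dot y (\sum_(i <- r | P i) F i) = \sum_(i <- r | P i) dot y (F i).
Proof. rewrite dotC dot_suml; apply: eq_bigr => i _; exact: dotC. Qed.
Lemma dotxx_ge0 x : 0 <= dot x x.
Proof. by apply: sumr_ge0 => k _; rewrite -expr2 sqr_ge0. Qed.
Lemma dotxx_eq0 x : dot x x = 0 -> x = 0.
Proof.
move=> /eqP; rewrite psumr_eq0 => [/allP H|k _]; last by rewrite -expr2 sqr_ge0.
apply/rowP => k; rewrite mxE; apply/eqP; rewrite -sqrf_eq0 expr2.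
by have := H k (mem_index_enum _); rewrite implyTb.
Qed.
Lemma nrm_ge0 x : 0 <= nrm x. Proof. exact: sqrtr_ge0. Qed.
Lemma nrm_sq x : nrm x ^+ 2 = dot x x.
Proof. by rewrite sqr_sqrtr // dotxx_ge0. Qed.
Lemma nrm_gt0 x : x != 0 -> 0 < nrm x.
Proof.
move=> x0; rewrite lt_neqAle nrm_ge0 andbT; apply/eqP => h.
by move/eqP: x0; apply; apply: dotxx_eq0; rewrite -nrm_sq -h expr0n.
Qed.
Lemma nrmZ a x : nrm (a *: x) = `|a| * nrm x.
Proof. by rewrite /nrm dotZl dotZr mulrA -expr2 sqrtrM ?sqr_ge0 // sqrtr_sqr. Qed.
Lemma edistE x y : edist x y = nrm (x - y).
Proof. by rewrite /edist /nrm /dot; congr Num.sqrt; apply: eq_bigr => k _; rewrite !mxE expr2. Qed.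
Lemma edistC x y : edist x y = edist y x.
Proof. by rewrite !edistE -opprB -scaleN1r nrmZ normrN normr1 mul1r. Qed.

End Aux.

Section LA.
Variables (R : realType) (d : nat).
Notation point := 'rV[R]_d.

Lemma sum_le0_eq0 (I : finType) (f : I -> R) i0 :
  (forall i, f i <= 0) -> \sum_i f i = 0 -> f i0 = 0.
Proof.
move=> fle s0; apply/eqP; rewrite eq_le fle /=.
have := s0; rewrite (bigD1 i0) //= => h.
have : \sum_(i | i != i0) f i <= 0 by apply: sumr_le0 => i _.
lra.
Qed.

Lemma claim N (W : 'I_N -> point) (S : 'I_N -> R) (c : 'I_N -> R) (last : 'I_N) :
  (forall i, S i != 0) -> \sum_i S i = 0 ->
  (forall i j, i != j -> dot (W i) (W j) <= 0) ->
  (forall i j, S i * S j < 0 -> dot (W i) (W j) < 0) ->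
  c last = 0 -> \sum_i c i *: W i = 0 -> forall i, c i = 0.
Proof.
move=> S0 Ssum Wle Wlt clast csum.
suff pos : forall c : 'I_N -> R, c last = 0 -> \sum_i c i *: W i = 0 ->
   forall i, c i <= 0.
  move=> i; apply/eqP; rewrite eq_le pos //=.
  rewrite -oppr_le0; apply: (pos (fun i => - c i)) => //; first by rewrite clast oppr0.
  by under eq_bigr do rewrite scaleNr; rewrite sumrN csum oppr0.
move=> {}c {}clast {}csum i0; rewrite leNgt; apply/negP => ci0.
pose cp i := if 0 <= c i then c i else 0.
pose cm i := if 0 <= c i then 0 else - c i.
have cpm i : c i = cp i - cm i.
  by rewrite /cp /cm; case: ifP => _; rewrite ?subr0 ?sub0r ?opprK.
have cp0 i : 0 <= cp i by rewrite /cp; case: ifP.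
have cm0 i : 0 <= cm i.
  by rewrite /cm; case: ifP => // /negbT; rewrite -ltNge oppr_ge0 => /ltW.
have cpm0 i : cp i * cm i = 0.
  by rewrite /cp /cm; case: ifP; rewrite ?mulr0 ?mul0r.
pose z := \sum_i cp i *: W i.
have zE : z = \sum_i cm i *: W i.
  apply/eqP; rewrite /z -subr_eq0 -sumrB; apply/eqP; rewrite -[RHS]csum; apply: eq_bigr => i _.
  by rewrite -scalerBl -cpm.
have z0 : z = 0.
  apply: dotxx_eq0; apply/eqP; rewrite eq_le dotxx_ge0 andbT.
  rewrite {2}zE /z dot_suml; apply: sumr_le0 => i _.
  rewrite dotZl dot_sumr mulr_sumr; apply: sumr_le0 => j _.
  rewrite dotZr mulrA; have [->|ij] := eqVneq i j; first by rewrite cpm0 mul0r.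
  by rewrite mulr_ge0_le0 ?mulr_ge0 ?Wle.
have orth i k : 0 < c i -> c k <= 0 -> dot (W i) (W k) = 0.
  move=> ci ck.
  have cpk : cp k = 0.
    by rewrite /cp; case: ifP => // h; apply/eqP; rewrite eq_le ck h.
  have cpi : cp i = c i by rewrite /cp ltW.
  have h : cp i * dot (W i) (W k) = 0.
    apply: (@sum_le0_eq0 _ (fun j => cp j * dot (W j) (W k))) => [j|].
      have [->|jk] := eqVneq j k; first by rewrite cpk mul0r.
      by rewrite mulr_ge0_le0 ?cp0 // Wle.
    rewrite (eq_bigr (fun j => dot (cp j *: W j) (W k))) => [|j _]; last by rewrite dotZl.
    by rewrite -dot_suml -/z z0 dot0l.
  by move/eqP: h; rewrite cpi mulf_eq0 gt_eqF //= => /eqP.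
have sgn i k : 0 < c i -> c k <= 0 -> 0 < S i * S k.
  move=> ci ck; rewrite lt_def mulf_neq0 ?S0 //= leNgt; apply/negP => /Wlt.
  by rewrite orth // ltxx.
have allpos j : 0 < S j * S last.
  have [cj|cj] := ltP 0 (c j); first by apply: sgn; rewrite // clast.
  have h1 := sgn _ _ ci0 cj; have h2 := sgn i0 last ci0 (ltac:(by rewrite clast)).
  have : 0 < (S i0 * S j) * (S i0 * S last) by apply: mulr_gt0.
  have : 0 < S i0 ^+ 2 by rewrite exprn_even_gt0 //= S0.
  nra.
have : 0 < \sum_j S j * S last.
  rewrite (bigD1 last) //=; apply: ltr_wpDr; last exact: allpos.
  by apply: sumr_ge0 => j _; apply: ltW.
by rewrite -mulr_suml Ssum mul0r ltxx.
Qed.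

Lemma LA n (W : 'I_n.+1 -> point) (S : 'I_n.+1 -> R) :
  (forall i, S i != 0) -> \sum_i S i = 0 ->
  (forall i j, i != j -> dot (W i) (W j) <= 0) ->
  (forall i j, S i * S j < 0 -> dot (W i) (W j) < 0) -> (n <= d)%N.
Proof.
move=> S0 Ssum Wle Wlt.
pose M : 'M[R]_(n, d) := \matrix_(i < n, k < d) W (widen_ord (leqnSn n) i) ord0 k.
have : row_free M.
  apply: inj_row_free => u uM.
  pose c (j : 'I_n.+1) := if unlift ord_max j is Some i then u ord0 i else 0.
  have cl : c ord_max = 0 by rewrite /c unlift_none.
  have cs : \sum_j c j *: W j = 0.
    rewrite big_ord_recr /= cl scale0r addr0.
    apply/rowP => k; rewrite summxE [RHS]mxE.
    have := congr1 (fun m : 'rV[R]_d => m ord0 k) uM; rewrite !mxE => h.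
    apply: eq_trans h; apply: eq_bigr => i _; rewrite !mxE /c.
    have -> : widen_ord (leqnSn n) i = lift ord_max i.
      by apply: val_inj; rewrite /= /bump leqNgt ltn_ord.
    by rewrite liftK.
  have := claim S0 Ssum Wle Wlt cl cs => c0.
  apply/rowP => i; rewrite mxE; have := c0 (lift ord_max i).
  by rewrite /c liftK.
move=> /eqP <-; exact: rank_leq_col.
Qed.
End LA.

Ltac eqcase := repeat (rewrite ?eqxx /=; try done; match goal with
 | H : is_true (?x != ?x) |- _ => by rewrite eqxx in H
 | |- context [?x == ?y] => is_var x; is_var y;
     let h := fresh in have [h|h] := eqVneq x y; [subst|let h' := fresh in have h' := h; rewrite eq_sym in h'; rewrite ?(negbTE h) ?(negbTE h')]
 end).

Section Pert.
Variables (R : realType) (d : nat).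
Notation point := 'rV[R]_d.
Notation edge := (point * point * R)%type.

Definition inc (v : point) (e : edge) : bool := (e.1.1 == v) || (e.1.2 == v).
Definition contrib (e : edge) (z : point) : R := e.2 * ((z == e.1.2)%:R - (z == e.1.1)%:R).
Definition other (v : point) (e : edge) : point := if e.1.1 == v then e.1.2 else e.1.1.
Definition reroute (v w : point) (e : edge) : edge :=
  ((if e.1.1 == v then w else e.1.1, if e.1.2 == v then w else e.1.2), e.2).
Definition endpts (s : seq edge) := [seq e.1.1 | e <- s] ++ [seq e.1.2 | e <- s].
Definition newE v w (P : pred edge) K (s : seq edge) :=
  [seq e <- s | ~~ P e] ++ map (reroute v w) [seq e <- s | P e] ++
  (if K == 0 then [::] else [:: ((w, v), K)]).

Lemma contrib_re v w (e : edge) z : w != v -> w != e.1.1 -> w != e.1.2 ->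
  contrib (reroute v w e) z =
  contrib e z - (z == v)%:R * contrib e v + (z == w)%:R * contrib e v.
Proof.
case: e => [[a b] m] /=; rewrite /contrib /reroute /=.
eqcase; try (move=> *; ring). 
Qed.

Lemma same_pairC (e f : edge) : same_pair e f = same_pair f e.
Proof.
rewrite /same_pair; case: e => [[a b] m]; case: f => [[a' b'] m'] /=.
eqcase.
Qed.

Lemma same_pair_re v w (e f : edge) : w != v -> w != e.1.1 -> w != e.1.2 ->
  w != f.1.1 -> w != f.1.2 -> e.1.1 != e.1.2 -> f.1.1 != f.1.2 -> inc v e -> inc v f ->
  same_pair (reroute v w e) (reroute v w f) -> same_pair e f.
Proof.
case: e => [[a b] m]; case: f => [[a' b'] m']; rewrite /same_pair /reroute /inc /=.
eqcase.
Qed.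

Lemma re_old v w (e f : edge) : inc v e -> w != v -> w != f.1.1 -> w != f.1.2 ->
  ~~ same_pair (reroute v w e) f.
Proof.
case: e => [[a b] m]; case: f => [[a' b'] m']; rewrite /same_pair /reroute /inc /=.
eqcase.
Qed.

Lemma new_old v w K (f : edge) : w != f.1.1 -> w != f.1.2 ->
  ~~ same_pair ((w, v), K) f.
Proof.
case: f => [[a' b'] m']; rewrite /same_pair /=.
eqcase.
Qed.

Lemma new_re v w K (e : edge) : inc v e -> e.1.1 != e.1.2 -> w != v -> w != e.1.1 -> w != e.1.2 ->
  ~~ same_pair (reroute v w e) ((w, v), K).
Proof.
case: e => [[a b] m]; rewrite /same_pair /reroute /inc /=.
eqcase.
Qed.

Lemma newflow_ok (mup mum : point -> R) (F : flow R d) v w (P : pred edge) :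
  is_flow mup mum F -> v \in fV F -> w != v -> w \notin endpts (fE F) ->
  (forall e, e \in fE F -> P e -> inc v e) ->
  is_flow mup mum (Flow (w :: fV F) (newE v w P (\sum_(e <- fE F | P e) contrib e v) (fE F))).
Proof.
case=> H1 H2 H3 H4 vV wv wE Pinc; set K := \sum_(e <- fE F | P e) contrib e v.
have wne e : e \in fE F -> (w != e.1.1) && (w != e.1.2).
  move=> eF; apply/andP; split; apply/negP => /eqP h; move/negP: wE; apply;
  rewrite /endpts mem_cat h.
    by rewrite (map_f (fun e : edge => e.1.1) eF).
  by rewrite (map_f (fun e : edge => e.1.2) eF) orbT.
split.
- by move=> x /H1 xV; rewrite in_cons xV orbT.
- move=> e; rewrite /newE !mem_cat => /or3P [ | | ].
  + rewrite mem_filter => /andP [_ eF]; have [a b c m0] := H2 e eF.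
    by split; rewrite // in_cons ?a ?b orbT.
  + move=> /mapP [f]; rewrite mem_filter => /andP [Pf fF] ->.
    have [a b c m0] := H2 f fF; have incf := Pinc f fF Pf.
    have /andP[w1 w2] := wne f fF.
    rewrite /reroute /=; split => //.
    * by case: ifP => _; rewrite in_cons ?eqxx ?a ?orbT.
    * by case: ifP => _; rewrite in_cons ?eqxx ?b ?orbT.
    * move: incf c w1 w2 wv; rewrite /inc; case: f {a b m0 Pf fF} => [[x y] m] /=.
      eqcase.
  + case: eqP => // K0; rewrite inE => /eqP -> /=.
    by split; rewrite ?in_cons ?eqxx ?vV ?orbT //; apply/eqP.
- rewrite /newE pairwise_cat pairwise_cat allrel_catr.
  have pA := pairwise_filter (fun e => ~~ P e) H3.
  have AB : allrel (fun e f => ~~ same_pair e f) [seq e <- fE F | ~~ P e]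
      [seq reroute v w e | e <- [seq e <- fE F | P e]].
    apply/allrelP => f e; rewrite mem_filter => /andP [_ fF] /mapP [e'].
    rewrite mem_filter => /andP [Pe eF] ->; rewrite same_pairC.
    have /andP[w1 w2] := wne f fF.
    exact: re_old (Pinc e' eF Pe) wv w1 w2.
  have AC : allrel (fun e f => ~~ same_pair e f) [seq e <- fE F | ~~ P e]
      (if K == 0 then [::] else [:: (w, v, K)]).
    case: eqP => _; first exact: allrel0r. rewrite allrel1r; apply/allP => f; rewrite mem_filter => /andP [_ fF].
    have /andP[w1 w2] := wne f fF; by rewrite same_pairC new_old.
  have BC : allrel (fun e f => ~~ same_pair e f) 
      [seq reroute v w e | e <- [seq e <- fE F | P e]]
      (if K == 0 then [::] else [:: (w, v, K)]).
    case: eqP => _; first exact: allrel0r. rewrite allrel1r; apply/allP => e /mapP [e'].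
    rewrite mem_filter => /andP [Pe eF] ->.
    have /andP[w1 w2] := wne e' eF; have [_ _ c _] := H2 e' eF.
    exact: new_re (Pinc e' eF Pe) c wv w1 w2.
  have pB : pairwise (fun e f => ~~ same_pair e f)
      [seq reroute v w e | e <- [seq e <- fE F | P e]].
    rewrite pairwise_map.
    apply: (sub_in_pairwise (P := mem [seq e <- fE F | P e])); last exact: (pairwise_filter _ H3).
      move=> e f; rewrite !mem_filter => /andP [Pe eF] /andP [Pf fF].
      have /andP[w1 w2] := wne e eF; have /andP[w3 w4] := wne f fF.
      have [_ _ c1 _] := H2 e eF; have [_ _ c2 _] := H2 f fF.
      apply: contra => /=.
      exact: (same_pair_re wv w1 w2 w3 w4 c1 c2 (Pinc _ eF Pe) (Pinc _ fF Pf)).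
    by apply/allP.
  have pC : pairwise (fun e f => ~~ same_pair e f) (if K == 0 then [::] else [:: (w, v, K)]).
    by case: eqP.
  by rewrite AB AC pA BC pB pC.
- move=> z; rewrite H4 /newE !big_cat /= big_map !big_filter.
  have -> : \sum_(e <- fE F | P e) contrib (reroute v w e) z =
      \sum_(e <- fE F | P e) contrib e z - (z == v)%:R * K + (z == w)%:R * K.
    rewrite /K !mulr_sumr -sumrN -!big_split /=.
    rewrite big_seq_cond [RHS]big_seq_cond; apply: eq_bigr => e /andP [eF _].
    by have /andP[w1 w2] := wne e eF; rewrite contrib_re // mulrN.
  rewrite (bigID P) /=.
  case: (eqVneq K 0) => [K0|K0].
    by rewrite K0 big_nil /contrib; ring.
  rewrite big_seq1 /contrib /=; ring.
Qed.
End Pert.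

Section Cost.
Variables (R : realType) (d : nat).
Notation point := 'rV[R]_d.
Notation edge := (point * point * R)%type.

Definition wv (v : point) (e : edge) : point :=
  (Num.sqrt `|e.2| / nrm (other v e - v)) *: (other v e - v).

Lemma key_ineq (x v T : point) eps : x != v ->
  edist x (v + eps *: T) <= edist x v - eps * dot (x - v) T / nrm (x - v)
     + eps ^+ 2 * dot T T / (2 * nrm (x - v)).
Proof.
move=> xv; have A0 : 0 < nrm (x - v) by apply: nrm_gt0; rewrite subr_eq0.
rewrite !edistE; set A := nrm (x - v).
have -> : x - (v + eps *: T) = (x - v) - eps *: T by rewrite opprD addrA.
set y := nrm _.
have y2 : y ^+ 2 = A ^+ 2 - 2 * eps * dot (x - v) T + eps ^+ 2 * dot T T.
  rewrite /y /A !nrm_sq !dotBl !dotBr !dotZl !dotZr (dotC T x) (dotC T v); ring.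
have y0 : 0 <= y by apply: nrm_ge0.
rewrite -(ler_pM2l (_ : 0 < 2 * A)); last by rewrite mulr_gt0.
have -> : 2 * A * (A - eps * dot (x - v) T / A + eps ^+ 2 * dot T T / (2 * A)) =
   A ^+ 2 + y ^+ 2.
  rewrite y2; field; by rewrite gt_eqF.
have := sqr_ge0 (A - y); nra.
Qed.

Lemma exists_delta (s : seq point) (v : point) :
  exists2 del : R, 0 < del & forall p, p \in s -> p != v -> del < nrm (p - v).
Proof.
elim: s => [|p s [del del0 IH]]; first by exists 1.
have [->|pv] := eqVneq p v.
  exists del => // q; rewrite in_cons => /orP [/eqP -> /negP //|]; exact: IH.
have np : 0 < nrm (p - v) by apply: nrm_gt0; rewrite subr_eq0.
exists (Num.min del (nrm (p - v) / 2)).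
  by rewrite lt_min del0 divr_gt0.
move=> q; rewrite in_cons => /orP [/eqP -> _|qs qv].
  by rewrite gt_min; apply/orP; right; lra.
by rewrite gt_min (IH q qs qv).
Qed.

Lemma edist_re v w (e : edge) : inc v e -> e.1.1 != e.1.2 ->
  edist (reroute v w e).1.1 (reroute v w e).1.2 = edist (other v e) w /\
  edist e.1.1 e.1.2 = edist (other v e) v.
Proof.
case: e => [[a b] m]; rewrite /inc /reroute /other /=.
have [->|av] := eqVneq a v.
  by move=> _ vb; rewrite eq_sym (negbTE vb) (edistC w) (edistC v).
by rewrite /= => /eqP ->; rewrite eqxx.
Qed.


Lemma perturb (mup mum : point -> R) (F : flow R d) v (P : pred edge) :
  is_solution mup mum F -> v \in fV F ->
  (forall e, e \in fE F -> P e -> inc v e) ->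
  dot (\sum_(e <- fE F | P e) wv v e) (\sum_(e <- fE F | P e) wv v e)
    <= `|\sum_(e <- fE F | P e) contrib e v|.
Proof.
case=> fl hmin vV Pinc.
set T := \sum_(e <- fE F | P e) wv v e; set K := \sum_(e <- fE F | P e) contrib e v.
rewrite leNgt; apply/negP => TK.
have [_ H2 _ _] := fl.
have TT0 : 0 < dot T T by apply: le_lt_trans TK.
set tau := nrm T.
have tau0 : 0 < tau by rewrite /tau /nrm sqrtr_gt0.
have tau2 : tau ^+ 2 = dot T T by rewrite nrm_sq.
have sK : Num.sqrt `|K| < tau by rewrite /tau /nrm ltr_sqrt.
have sK0 : 0 <= Num.sqrt `|K| by apply: sqrtr_ge0.
have [del del0 hdel] := exists_delta (endpts (fE F)) v.
set g := tau ^+ 2 - Num.sqrt `|K| * tau.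
have g0 : 0 < g by rewrite /g; nra.
set C := \sum_(e <- fE F | P e)
   Num.sqrt `|e.2| * dot T T / (2 * nrm (other v e - v)).
have C0 : 0 <= C.
  apply: sumr_ge0 => e _; apply: divr_ge0; first by rewrite mulr_ge0 ?sqrtr_ge0 ?dotxx_ge0.
  by rewrite mulr_ge0 ?nrm_ge0.
set eps := Num.min (del / (2 * tau)) (g / (2 * (C + 1))).
have eps0 : 0 < eps by rewrite lt_min !divr_gt0 // ?mulr_gt0 //; lra.
have eps1 : eps * tau < del.
  have : eps <= del / (2 * tau) by rewrite ge_min lexx.
  rewrite ler_pdivlMr ?mulr_gt0 //; nra.
have eps2 : eps * (C + 1) <= g / 2.
  have : eps <= g / (2 * (C + 1)) by rewrite ge_min lexx orbT.
  rewrite ler_pdivlMr ?mulr_gt0 //; last lra.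
  move=> h; nra.
set w := v + eps *: T.
have nwv : nrm (w - v) = eps * tau.
  by rewrite /w addrC addKr nrmZ ger0_norm // ltW.
have wv0 : w != v.
  apply/eqP => h; move: nwv; rewrite h subrr.
  rewrite (_ : nrm 0 = 0); last by rewrite /nrm dot0l sqrtr0.
  move=> h2; have : 0 < eps * tau by rewrite mulr_gt0.
  by rewrite -h2 ltxx.
have wE : w \notin endpts (fE F).
  apply/negP => /hdel /(_ wv0); rewrite nwv; lra.
have G := newflow_ok fl vV wv0 wE Pinc.
have := hmin _ G; apply/negP; rewrite -ltNge.
rewrite /gilbert_cost /newE /= !big_cat big_map !big_filter.
rewrite [X in _ < X](bigID P) -/K [X in _ < X]addrC ltrD2l.
have newt : \sum_(i <- (if K == 0 then [::] else [:: (w, v, K)])) Num.sqrt `|i.2| * edist i.1.1 i.1.2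
     <= Num.sqrt `|K| * (eps * tau).
  case: eqP => _; first by rewrite big_nil mulr_ge0 // mulr_ge0 // ltW.
  by rewrite big_seq1 /= edistE nwv.
have sumt : \sum_(i <- fE F | P i) Num.sqrt `|(reroute v w i).2| *
    edist (reroute v w i).1.1 (reroute v w i).1.2 <=
  \sum_(i <- fE F | P i) Num.sqrt `|i.2| * edist i.1.1 i.1.2 - eps * dot T T + eps ^+ 2 * C.
  rewrite {2}/T dot_suml /C mulr_sumr mulr_sumr -sumrN -!big_split /=.
  rewrite big_seq_cond [X in _ <= X]big_seq_cond; apply: ler_sum => e /andP [eF Pe].
  have [_ _ c _] := H2 e eF; have ie := Pinc e eF Pe.
  have [-> ->] := edist_re w ie c.
  have ov : other v e != v.
    by move: ie c; rewrite /inc /other; case: ifP => [/eqP -> _ /=|/negbT h /= /eqP ->]; rewrite // eq_sym.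
  have := key_ineq T eps ov; rewrite -/w => h.
  have s0 : 0 <= Num.sqrt `|e.2| by apply: sqrtr_ge0.
  rewrite /= (le_trans (ler_wpM2l s0 h)) // /wv dotZl.
  have A0 : 0 < nrm (other v e - v) by apply: nrm_gt0; rewrite subr_eq0.
  rewrite le_eqVlt; apply/orP; left; apply/eqP; field; by rewrite gt_eqF.
rewrite (le_lt_trans (lerD sumt newt)) //.
have : eps * C <= g / 2 by nra.
rewrite -tau2; rewrite /g in g0 *; nra.
Qed.

End Cost.

Section Main.
Variables (R : realType) (d : nat).
Notation point := 'rV[R]_d.
Notation edge := (point * point * R)%type.

Lemma contrib_norm v (e : edge) : inc v e -> e.1.1 != e.1.2 -> `|contrib e v| = `|e.2|.
Proof.
case: e => [[a b] m]; rewrite /inc /contrib /=.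
have [->|av] := eqVneq a v.
  by move=> _ vb; rewrite (negbTE vb) /= sub0r mulrN1 normrN.
by rewrite /= => /eqP -> _; rewrite eqxx subr0 mulr1.
Qed.

Lemma wv_sq v (e : edge) : inc v e -> e.1.1 != e.1.2 ->
  dot (wv v e) (wv v e) = `|contrib e v|.
Proof.
move=> ie c; rewrite contrib_norm // /wv dotZl dotZr.
have ov : other v e != v.
  by move: ie c; rewrite /inc /other; case: ifP => [/eqP -> _ /=|/negbT h /= /eqP ->]; rewrite // eq_sym.
have A0 : 0 < nrm (other v e - v) by apply: nrm_gt0; rewrite subr_eq0.
rewrite -nrm_sq; set A := nrm _.
have s2 : Num.sqrt `|e.2| ^+ 2 = `|e.2| by rewrite sqr_sqrtr.
move: s2; set s := Num.sqrt `|e.2| => s2; rewrite -s2; field; by rewrite gt_eqF.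
Qed.

Lemma sum_pair (V : nmodType) (s : seq edge) a b (f : edge -> V) : uniq s -> a \in s -> b \in s -> a != b ->
  \sum_(e <- s | (e == a) || (e == b)) f e = f a + f b.
Proof.
move=> us aS bS ab.
rewrite big_mkcond (bigD1_seq a) //= eqxx /=; congr (_ + _).
rewrite big_mkcond (bigD1_seq b) //= eq_sym ab eqxx orbT /=.
rewrite big1 ?addr0 // => e eb; case: ifP => // ea.
by rewrite (negbTE eb) orbF (negbTE ea).
Qed.

Lemma norm_lt a b : a * b < 0 -> `|a + b| < `|a| + `|b| :> R.
Proof.
move=> ab.
have : a * b != 0 by rewrite lt_eqF. rewrite mulf_eq0 negb_or => /andP [an bn].
have [a0|a0] := lerP 0 a; have [b0|b0] := lerP 0 b.
- by have := mulr_ge0 a0 b0; lra.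
- have a1 : 0 < a by rewrite lt_def an a0.
  rewrite (ger0_norm a0) (ltr0_norm b0).
  have [s0|s0] := lerP 0 (a + b); [rewrite ger0_norm // | rewrite ltr0_norm //]; lra.
- have b1 : 0 < b by rewrite lt_def bn b0.
  rewrite (ltr0_norm a0) (ger0_norm b0).
  have [s0|s0] := lerP 0 (a + b); [rewrite ger0_norm // | rewrite ltr0_norm //]; lra.
- by move: ab; rewrite ltNge ltW // nmulr_lgt0.
Qed.

End Main.

Unset Implicit Arguments.
Theorem proposition1 (R : realType) (d : nat) (hd : (2 <= d)%N)
  (mup mum : 'rV[R]_d -> R)
  (hp : fin_supp_measure mup) (hm : fin_supp_measure mum)
  (hmass : equal_mass mup mum)
  (F : flow R d) (hF : is_solution mup mum F)
  (v : 'rV[R]_d) (hv : is_branching_point mup mum F v) :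
  (degree F v <= d.+1)%N.
Proof.
have [fl hmin] := hF; have [H1 H2 H3 H4] := fl.
case: hv => vV mp0 mm0.
set I := [seq e <- fE F | inc v e].
have -> : degree F v = size I by rewrite /degree size_filter.
case HI: (size I) => [//|n].
have uF : uniq (fE F).
  apply: (pairwise_uniq _ H3) => e /=; by rewrite /same_pair !eqxx.
have uI : uniq I by apply: filter_uniq.
pose e0 : ('rV[R]_d * 'rV[R]_d * R)%type := (0, 0, 0).
pose E (i : 'I_n.+1) := nth e0 I i.
have EF i : E i \in fE F /\ inc v (E i).
  by have := @mem_nth _ e0 I i; rewrite HI ltn_ord mem_filter => /(_ isT) /andP [].
have Ec i : (E i).1.1 != (E i).1.2 by have [eF _] := EF i; case: (H2 _ eF).
pose W i := wv v (E i). pose S i := contrib (E i) v.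
have Wsq i : dot (W i) (W i) = `|S i| by apply: wv_sq; [case: (EF i)|].
have pairc i j : i != j -> dot (W i) (W i) + dot (W j) (W j) + 2 * dot (W i) (W j) <= `|S i + S j|.
  move=> ij.
  have Eij : E i != E j.
    by rewrite /E nth_uniq // HI.
  have Pinc : forall e, e \in fE F -> (e == E i) || (e == E j) -> inc v e.
    move=> e eF /orP [] /eqP ->; [case: (EF i) | case: (EF j)] => //.
  have := @perturb R d mup mum F v (fun e => (e == E i) || (e == E j)) hF vV Pinc.
  have [eFi _] := EF i; have [eFj _] := EF j.
  rewrite (sum_pair (wv v) uF eFi eFj Eij) (sum_pair (fun e => contrib e v) uF eFi eFj Eij) !dotDl !dotDr (dotC (W j) (W i)) => h.
  have <- : dot (W i) (W i) + dot (W i) (W j) + (dot (W i) (W j) + dot (W j) (W j)) =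
     dot (W i) (W i) + dot (W j) (W j) + 2 * dot (W i) (W j) by ring.
  exact: h.
apply: (@LA R d n W S).
- move=> i; rewrite -normr_eq0 /S contrib_norm ?normr_eq0 //; last by case: (EF i).
  have [eF _] := EF i; by case: (H2 _ eF).
- have : \sum_(e <- I) contrib e v = 0.
    rewrite big_filter big_mkcond /=.
    rewrite (eq_bigr (fun e => contrib e v)); first by rewrite -H4 mp0 mm0 subrr.
    move=> e _; case: ifP => // /negbT; rewrite /inc negb_or => /andP [h1 h2].
    by rewrite /contrib eq_sym (negbTE h2) eq_sym (negbTE h1) subrr mulr0.
  by rewrite (big_nth e0) HI big_mkord.
- move=> i j ij; have := pairc i j ij; rewrite !Wsq.
  have := ler_normD (S i) (S j); lra.
- move=> i j Sij.
  have ij : i != j.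
    by apply/eqP => h; move: Sij; rewrite h ltNge -expr2 sqr_ge0.
  have := pairc i j ij; rewrite !Wsq.
  have := norm_lt Sij; lra.
Qed.
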